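(* Let $n\ge2$, $p\in(0,1/2)$, $q=1-p$, $\tilde q=1-2p$, and $\beta_n=2^{1/(n-1)}$. Let $X_1,\dots,X_n$ be i.i.d. with $P(X_i=1)=P(X_i=-1)=p$, $P(X_i=0)=1-2p$, and independently let $U_1,\dots,U_n$ be i.i.d. uniform on $[0,1]$ with order statistics $T_1<\dots<T_n$, $T_i$ being the arrival time of $X_i$. For $x\in[0,1]$, the $x$-strategy selects the first $X_i\neq0$ with $T_i>x$ (selecting nothing, i.e. losing, if there is none); it wins if the selected value is $1$ and no later-arriving variable equals $1$, or the selected value is $-1$ and no later-arriving variable equals $-1$. Then its win probability is $$p_n(x)=2\bigl((q+px)^n-(\tilde q+2px)^n\bigr).$$ If $p\ge\frac{\beta_n-1}{2\beta_n-1}$, then $p_n$ attains its maximum over $[0,1]$ at $x_n^\star=\frac{1}{p}\cdot\frac{q-\tilde q\beta_n}{2\beta_n-1}\in[0,1]$, with maximal value $$p_n(x_n^\star)=2(2\beta_n-1)^{1-n},$$ which does not depend on $p$. Moreover $p_n(x_n^\star)$ is decreasing in $n$ and converges to $1/2$ as $n\to\infty$. *)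

(* Defs.v *)
From Stdlib Require Import Reals Lra Lia ZArith List.
Open Scope R_scope.

Definition vals : list Z := (-1 :: 0 :: 1 :: nil)%Z.

(* All value sequences of length n (the X's listed in arrival order). *)
Fixpoint allseqs (n : nat) : list (list Z) :=
  match n with
  | O => nil :: nil
  | S m => flat_map (fun v => map (fun s => v :: s) (allseqs m)) vals
  end.

Definition wt (p : R) (v : Z) : R := if Z.eqb v 0 then 1 - 2 * p else p.

Definition seq_prob (p : R) (s : list Z) : R :=
  fold_right (fun v acc => wt p v * acc) 1 s.

(* Outcome of the x-strategy, given the (arrival-ordered) values of the
   variables arriving after time x: select the first nonzero one; win iff
   no later-arriving variable has the same value; lose if none is nonzero. *)
Fixpoint wins (s : list Z) : bool :=
  match s with
  | nil => false
  | v :: t => if Z.eqb v 0 then wins t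
              else negb (existsb (fun w => Z.eqb w v) t)
  end.

(* Since the X_i are i.i.d. and
   independent of the U_j, the values listed in arrival order are i.i.d.
   with the law above, and the number k of arrivals at times <= x is
   Binomial(n, x) (= #{j | U_j <= x}), independent of the values. *)
Definition win_prob (n : nat) (p x : R) : R :=
  sum_f_R0 (fun k =>
     C n k * x ^ k * (1 - x) ^ (n - k) *
     fold_right Rplus 0
       (map (fun s => seq_prob p s * (if wins (skipn k s) then 1 else 0))
            (allseqs n)))
   n.

Definition beta_n (n : nat) : R := Rpower 2 (1 / (INR n - 1)).

Definition p_n (n : nat) (p x : R) : R :=
  2 * ((1 - p + p * x) ^ n - (1 - 2 * p + 2 * p * x) ^ n).

Definition x_star (n : nat) (p : R) : R :=
  (1 / p) * (((1 - p) - (1 - 2 * p) * beta_n n) / (2 * beta_n n - 1)).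

Definition v_star (n : nat) : R :=
  2 * Rpower (2 * beta_n n - 1) (1 - INR n).

(* Main.v *)
Require Import Defs.
From Stdlib Require Import Reals Lra Lia ZArith List.
Open Scope R_scope.


Definition lsum (l : list R) : R := fold_right Rplus 0 l.
Lemma lsum_app l1 l2 : lsum (l1 ++ l2) = lsum l1 + lsum l2.
Proof. induction l1; simpl; [ring| rewrite IHl1; ring]. Qed.
Lemma lsum_scal (A : Type) (c : R) (f : A -> R) l :
  lsum (map (fun s => c * f s) l) = c * lsum (map f l).
Proof. induction l; simpl; [ring| rewrite IHl; ring]. Qed.
Lemma lsum_ext (A : Type) (f g : A -> R) l :
  (forall s, f s = g s) -> lsum (map f l) = lsum (map g l).
Proof. intros H; induction l; simpl; auto. rewrite H, IHl; auto. Qed.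

Definition E (p : R) (n : nat) (F : list Z -> R) : R :=
  lsum (map (fun s => seq_prob p s * F s) (allseqs n)).

Lemma E_ext p n F G : (forall s, F s = G s) -> E p n F = E p n G.
Proof. intros H; unfold E; apply lsum_ext; intros; rewrite H; auto. Qed.

Lemma E_S p m F : E p (S m) F =
  p * E p m (fun s => F ((-1)%Z :: s)) + (1 - 2*p) * E p m (fun s => F (0%Z :: s))
  + p * E p m (fun s => F (1%Z :: s)).
Proof.
  unfold E; simpl allseqs; simpl flat_map.
  rewrite !map_app, !lsum_app, !map_map. simpl.
  rewrite <- !lsum_scal.
  rewrite (lsum_ext _ (fun x => wt p (-1) * seq_prob p x * F ((-1)%Z :: x)) (fun s => p * (seq_prob p s * F ((-1)%Z :: s))))
    by (intros; unfold wt; simpl; ring).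
  rewrite (lsum_ext _ (fun x => wt p 0 * seq_prob p x * F (0%Z :: x)) (fun s => (1-2*p) * (seq_prob p s * F (0%Z :: s))))
    by (intros; unfold wt; simpl; ring).
  rewrite (lsum_ext _ (fun x => wt p 1 * seq_prob p x * F (1%Z :: x)) (fun s => p * (seq_prob p s * F (1%Z :: s))))
    by (intros; unfold wt; simpl; ring).
  simpl. ring.
Qed.

Lemma E_const p n c : E p n (fun _ => c) = c.
Proof.
  induction n. unfold E; simpl; ring.
  rewrite E_S, IHn. ring.
Qed.

Lemma E_skip p k n G : (k <= n)%nat ->
  E p n (fun s => G (skipn k s)) = E p (n - k) G.
Proof.
  revert n; induction k; intros n Hk.
  - replace (n - 0)%nat with n by lia. apply E_ext; auto.
  - destruct n; [lia|]. rewrite E_S. simpl skipn.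
    rewrite !IHk by lia. replace (S n - S k)%nat with (n - k)%nat by lia.
    ring.
Qed.

Lemma E_none p v m : (v = 1 \/ v = -1)%Z ->
  E p m (fun s => if negb (existsb (fun w => Z.eqb w v) s) then 1 else 0) = (1 - p) ^ m.
Proof.
  intros Hv; induction m.
  - unfold E; simpl; ring.
  - rewrite E_S.
    destruct Hv; subst v; simpl existsb; simpl Z.eqb; cbv iota;
    simpl negb; rewrite E_const, IHm; simpl; ring.
Qed.

Lemma E_wins p m : E p m (fun s => if wins s then 1 else 0) = 2 * ((1-p)^m - (1-2*p)^m).
Proof.
  induction m.
  - unfold E; simpl; ring.
  - rewrite E_S. simpl wins.
    rewrite (E_none p (-1) m) by auto. rewrite (E_none p 1 m) by auto.
    rewrite IHm. simpl. ring.
Qed.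

Lemma part1 n p x : win_prob n p x = p_n n p x.
Proof.
  unfold win_prob, p_n.
  rewrite (sum_eq _ (fun k => (C n k * x ^ k * ((1-x)*(1-p)) ^ (n - k)) * 2 -
                             (C n k * x ^ k * ((1-x)*(1-2*p)) ^ (n - k)) * 2)).
  - rewrite minus_sum, <- !scal_sum, <- !binomial.
    replace (x + (1 - x) * (1 - p)) with (1 - p + p * x) by ring.
    replace (x + (1 - x) * (1 - 2 * p)) with (1 - 2 * p + 2 * p * x) by ring. ring.
  - intros i Hi. change (fold_right Rplus 0 ?l) with (lsum l).
    change (lsum (map _ (allseqs n))) with (E p n (fun s => if wins (skipn i s) then 1 else 0)).
    rewrite (E_skip p i n (fun s => if wins s then 1 else 0)) by lia.
    rewrite E_wins, !Rpow_mult_distr. ring.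
Qed.

Fixpoint Ssum (a c : R) (m : nat) : R :=
  match m with O => 0 | S k => a ^ k + c * Ssum a c k end.

Lemma pow_diff a c m : a ^ m - c ^ m = (a - c) * Ssum a c m.
Proof. induction m; simpl; [ring|]. replace (a * a ^ m - c * c ^ m) with ((a - c) * a^m + c * (a^m - c^m)) by ring.
  rewrite IHm; ring. Qed.

Lemma Ssum_nonneg a c m : 0 <= a -> 0 <= c -> 0 <= Ssum a c m.
Proof. intros; induction m; simpl; [lra|].
  pose proof (pow_le a m H). pose proof (Rmult_le_pos c _ H0 IHm). lra. Qed.

Lemma Ssum_ge k X Z Y W m : 0 <= k -> 0 <= Y -> 0 <= W -> k*Y <= X -> k*W <= Z ->
  k ^ m * Ssum Y W m <= k * Ssum X Z m.
Proof.
  intros hk hY hW hX hZ; induction m; simpl; [lra|].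
  assert (h1 : (k*Y)^m <= X^m) by (apply pow_incr; split; [apply Rmult_le_pos|]; lra).
  rewrite Rpow_mult_distr in h1.
  pose proof (Ssum_nonneg Y W m hY hW) as hS.
  assert (h2 : k * (k^m * Y^m) <= k * X^m) by (apply Rmult_le_compat_l; lra).
  assert (h3 : k * W * (k^m * Ssum Y W m) <= Z * (k * Ssum X Z m)).
  { apply Rmult_le_compat; try lra. apply Rmult_le_pos; auto. apply Rmult_le_pos; auto. apply pow_le; auto. }
  nra.
Qed.

Lemma Ssum_le k X Z Y W m : 0 <= k -> 0 <= X -> 0 <= Z -> 0 <= Y -> 0 <= W -> X <= k*Y -> Z <= k*W ->
  k * Ssum X Z m <= k ^ m * Ssum Y W m.
Proof.
  intros hk hX' hZ' hY hW hX hZ; induction m; simpl; [lra|].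
  assert (h1 : X^m <= (k*Y)^m) by (apply pow_incr; split; lra).
  rewrite Rpow_mult_distr in h1.
  pose proof (Ssum_nonneg X Z m hX' hZ') as hS.
  assert (h2 : k * X^m <= k * (k^m * Y^m)) by (apply Rmult_le_compat_l; lra).
  assert (h3 : Z * (k * Ssum X Z m) <= k * W * (k^m * Ssum Y W m)).
  { apply Rmult_le_compat; try lra. apply Rmult_le_pos; auto. }
  nra.
Qed.

Lemma INR_n1 n : (2 <= n)%nat -> INR n - 1 = INR (n - 1) /\ 1 <= INR (n-1).
Proof. intros h. split. rewrite minus_INR by lia. simpl. ring.
  replace 1 with (INR 1) by reflexivity. apply le_INR; lia. Qed.

Lemma beta_gt1 n : (2 <= n)%nat -> 1 < beta_n n.
Proof. intros h. destruct (INR_n1 n h) as [e1 e2]. unfold beta_n. rewrite e1.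
  rewrite <- (Rpower_O 2) at 1 by lra. apply Rpower_lt; [lra|].
  apply Rdiv_lt_0_compat; lra. Qed.

Lemma beta_pow n : (2 <= n)%nat -> beta_n n ^ (n - 1) = 2.
Proof. intros h. destruct (INR_n1 n h) as [e1 e2].
  rewrite <- Rpower_pow by (pose proof (beta_gt1 n h); lra).
  unfold beta_n. rewrite Rpower_mult, e1. replace (1 / INR (n-1) * INR (n-1)) with 1 by (field; lra).
  apply Rpower_1; lra. Qed.

Lemma beta_powS n : (2 <= n)%nat -> beta_n n ^ n = 2 * beta_n n.
Proof. intros h. replace n with (S (n-1)) at 2 by lia. simpl. rewrite beta_pow by auto. ring. Qed.

Lemma vstar_eq n : (2 <= n)%nat -> v_star n = 2 / (2 * beta_n n - 1) ^ (n - 1).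
Proof. intros h. destruct (INR_n1 n h) as [e1 e2]. pose proof (beta_gt1 n h).
  unfold v_star. replace (1 - INR n) with (- (INR (n-1))) by lra.
  rewrite Rpower_Ropp, Rpower_pow by lra. unfold Rdiv; ring. Qed.

Lemma part2 n p : (2 <= n)%nat -> 0 < p < 1/2 ->
  p >= (beta_n n - 1) / (2 * beta_n n - 1) ->
        0 <= x_star n p <= 1 /\
        (forall x, 0 <= x <= 1 -> p_n n p x <= p_n n p (x_star n p)) /\
        p_n n p (x_star n p) = v_star n.
Proof.
  intros hn hp hge.
  pose proof (beta_gt1 n hn) as hb. set (b := beta_n n) in *.
  assert (hD : 0 < 2*b - 1) by lra.
  assert (hge' : b - 1 <= p * (2*b-1)).
  { apply Rge_le in hge. apply (Rmult_le_compat_r (2*b-1)) in hge; [|lra].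
    unfold Rdiv in hge. rewrite Rmult_assoc, Rinv_l in hge; lra. }
  assert (exs : x_star n p * (p * (2*b-1)) = (1-p) - (1-2*p)*b).
  { unfold x_star. fold b. field. lra. }
  assert (hpD : 0 < p * (2*b-1)) by (apply Rmult_lt_0_compat; lra).
  assert (hx : 0 <= x_star n p <= 1).
  { split.
    - apply (Rmult_le_reg_r (p*(2*b-1))); auto. rewrite exs. lra.
    - apply (Rmult_le_reg_r (p*(2*b-1))); auto. rewrite exs. lra. }
  assert (ea : 1 - p + p * x_star n p = b / (2*b-1)).
  { unfold x_star; fold b. field. lra. }
  assert (eb : 1 - 2*p + 2*p * x_star n p = 1 / (2*b-1)).
  { unfold x_star; fold b. field. lra. }
  assert (hkn : b ^ n = 2 * b) by apply (beta_powS n hn).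
  split; [auto|split].
  - intros x hx01. unfold p_n. rewrite ea, eb.
    set (a := 1 - p + p*x). set (c := 1 - 2*p + 2*p*x).
    set (as_ := b / (2*b-1)). set (cs := 1 / (2*b-1)).
    assert (hc : 0 < c) by (unfold c; nra).
    assert (hcs : 0 < cs) by (unfold cs; apply Rdiv_lt_0_compat; lra).
    assert (hca : c = 2*a - 1) by (unfold c, a; ring).
    assert (hcsa : cs = 2*as_ - 1) by (unfold cs, as_; field; lra).
    assert (has : as_ = b * cs) by (unfold cs, as_; field; lra).
    assert (hdiff : 2 * ((as_ ^ n - cs ^ n) - (a ^ n - c ^ n)) = 2 * ((as_ - a) * (Ssum as_ a n - 2 * Ssum cs c n))).
    { replace ((as_ ^ n - cs ^ n) - (a ^ n - c ^ n)) with ((as_^n - a^n) - (cs^n - c^n)) by ring.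
      rewrite !pow_diff. replace (cs - c) with (2*(as_ - a)) by (rewrite hcsa, hca; ring). ring. }
    assert (0 <= (as_ - a) * (Ssum as_ a n - 2 * Ssum cs c n)).
    { destruct (Rle_lt_dec a as_) as [hle|hlt].
      - assert (ha1 : b * c <= a).
        { assert (a * (2*b-1) <= as_ * (2*b-1)) by (apply Rmult_le_compat_r; lra).
          assert (as_ * (2*b-1) = b) by (unfold as_; field; lra). nra. }
        pose proof (Ssum_ge b as_ a cs c n ltac:(lra) ltac:(lra) ltac:(lra) ltac:(lra) ha1) as hS.
        rewrite hkn in hS.
        assert (Ssum as_ a n - 2 * Ssum cs c n >= 0).
        { apply Rle_ge. apply (Rmult_le_reg_l b); [lra|]. nra. }
        nra.
      - assert (ha1 : a <= b * c).
        { assert (as_ * (2*b-1) <= a * (2*b-1)) by (apply Rmult_le_compat_r; lra).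
          assert (as_ * (2*b-1) = b) by (unfold as_; field; lra). nra. }
        assert (hap : 0 <= a) by (unfold a; nra).
        pose proof (Ssum_le b as_ a cs c n ltac:(lra) ltac:(lra) ltac:(lra) ltac:(lra) ltac:(lra) ltac:(lra) ha1) as hS.
        rewrite hkn in hS.
        assert (Ssum as_ a n - 2 * Ssum cs c n <= 0).
        { apply (Rmult_le_reg_l b); [lra|]. nra. }
        nra. }
    lra.
  - unfold p_n. rewrite ea, eb, vstar_eq by auto.
    unfold Rdiv. rewrite !Rpow_mult_distr, pow1, hkn.
    replace n with (S (n-1)) at 1 2 by lia. simpl pow.
    assert (0 < (2*b-1)^(n-1)) by (apply pow_lt; lra).
    rewrite pow_inv. fold b. field. lra.
Qed.

Lemma pow_lt_strict x z n : 0 <= x < z -> (0 < n)%nat -> x ^ n < z ^ n.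
Proof. intros h hn. induction n; [lia|]. destruct n. simpl; lra.
  assert (x ^ S n < z ^ S n) by (apply IHn; lia).
  change (x * x ^ S n < z * z ^ S n). pose proof (pow_le x (S n) ltac:(lra)).
  apply Rle_lt_trans with (x * z ^ S n). apply Rmult_le_compat_l; lra. apply Rmult_lt_compat_r; [|lra].
  apply pow_lt; lra. Qed.

Definition rr (y : R) (j : nat) := 2 * y ^ j - 1.

Lemma rr_pos y j : 1 < y -> 1 <= rr y j.
Proof. intros. unfold rr. pose proof (pow_R1_Rle y j ltac:(lra)). lra. Qed.

Lemma rho_dec y j : 1 < y -> rr y (S (S j)) / rr y (S j) < rr y (S j) / rr y j.
Proof. intros hy. pose proof (rr_pos y j hy). pose proof (rr_pos y (S j) hy). pose proof (rr_pos y (S (S j)) hy).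
  apply (Rmult_lt_reg_r (rr y (S j) * rr y j)). nra.
  replace (rr y (S (S j)) / rr y (S j) * (rr y (S j) * rr y j)) with (rr y (S (S j)) * rr y j) by (field; lra).
  replace (rr y (S j) / rr y j * (rr y (S j) * rr y j)) with (rr y (S j) * rr y (S j)) by (field; lra).
  unfold rr. simpl. set (z := y ^ j). assert (0 < z) by (apply pow_lt; lra).
  assert (0 < z * ((y-1)*(y-1))) by (apply Rmult_lt_0_compat; nra). nra. Qed.

Lemma Qlem y m : 1 < y -> (rr y (S m) / rr y m) ^ m <= rr y m /\
   (rr y (S (S m)) / rr y (S m)) ^ (S m) < rr y (S m).
Proof.
  intros hy. induction m.
  - assert (h0 : rr y 0 = 1) by (unfold rr; simpl; ring).
    split. simpl. lra.
    pose proof (rho_dec y 0 hy) as H. rewrite h0 in H. rewrite pow_1.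
    replace (rr y 1 / 1) with (rr y 1) in H by field. exact H.
  - destruct IHm as [_ IH]. split; [lra|].
    pose proof (rr_pos y (S m) hy). pose proof (rr_pos y (S (S m)) hy). pose proof (rr_pos y (S (S (S m))) hy).
    pose proof (rho_dec y (S m) hy) as hd.
    set (rho := rr y (S (S m)) / rr y (S m)) in *.
    assert (e : rr y (S (S m)) = rho * rr y (S m)) by (unfold rho; field; lra).
    assert (hr0 : 0 < rr y (S (S (S m))) / rr y (S (S m))) by (apply Rdiv_lt_0_compat; lra).
    apply Rlt_le_trans with (rho ^ S (S m)).
    + apply pow_lt_strict; [lra|lia].
    + rewrite e. change (rho * rho ^ S m <= rho * rr y (S m)). apply Rmult_le_compat_l; [|lra].
      unfold rho; apply Rlt_le, Rdiv_lt_0_compat; lra.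
Qed.

Lemma part3 n : (2 <= n)%nat -> v_star (S n) < v_star n.
Proof.
  intros hn. rewrite !vstar_eq by lia.
  set (m := (n - 1)%nat).
  assert (hm : (1 <= m)%nat) by (unfold m; lia).
  set (y := Rpower 2 (1 / (INR m * INR (S m)))).
  assert (hINR : 1 <= INR m) by (replace 1 with (INR 1) by auto; apply le_INR; lia).
  assert (hy : 1 < y).
  { unfold y. rewrite <- (Rpower_O 2) at 1 by lra. apply Rpower_lt; [lra|].
    rewrite S_INR. apply Rdiv_lt_0_compat; nra. }
  assert (e1 : beta_n n = y ^ S m).
  { unfold y. rewrite <- Rpower_pow by (apply exp_pos). rewrite Rpower_mult.
    unfold beta_n. f_equal. destruct (INR_n1 n hn) as [e _]. rewrite e. fold m.
    rewrite S_INR. field. lra. }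
  assert (e2 : beta_n (S n) = y ^ m).
  { unfold y. rewrite <- Rpower_pow by (apply exp_pos). rewrite Rpower_mult.
    unfold beta_n. f_equal. rewrite S_INR. replace (INR n) with (INR (S m)) by (f_equal; unfold m; lia).
    rewrite S_INR. field. lra. }
  rewrite e1, e2. replace (S n - 1)%nat with (S m) by (unfold m; lia). fold m.
  destruct m as [|m']; [lia|].
  destruct (Qlem y m' hy) as [_ Hq].
  change (2 * y ^ S (S m') - 1) with (rr y (S (S m'))). change (2 * y ^ S m' - 1) with (rr y (S m')).
  pose proof (rr_pos y (S m') hy). pose proof (rr_pos y (S (S m')) hy).
  assert (hlt : rr y (S (S m')) ^ S m' < rr y (S m') ^ S (S m')).
  { replace (rr y (S (S m'))) with (rr y (S (S m')) / rr y (S m') * rr y (S m')) by (field; lra).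
    rewrite Rpow_mult_distr. change (rr y (S m') ^ S (S m')) with (rr y (S m') * rr y (S m') ^ S m').
    set (R1 := rr y (S m')) in *. set (Q := (rr y (S (S m')) / R1) ^ S m') in *.
    assert (0 < R1 ^ S m') by (apply pow_lt; lra). nra. }
  assert (0 < rr y (S (S m')) ^ S m') by (apply pow_lt; lra).
  unfold Rdiv. apply Rmult_lt_compat_l; [lra|]. apply Rinv_lt_contravar; [nra|auto].
Qed.

Definition gfun (t : R) : R := ln (2 * exp t - 1).

Lemma gder : derivable_pt_lim gfun 0 2.
Proof.
  assert (hi : derivable_pt_lim (mult_real_fct 2 exp - fct_cte 1)%F 0 (2 * exp 0 - 0)).
  { apply derivable_pt_lim_minus. apply derivable_pt_lim_scal, derivable_pt_lim_exp. apply derivable_pt_lim_const. }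
  assert (hl : derivable_pt_lim ln ((mult_real_fct 2 exp - fct_cte 1)%F 0) (/ 1)).
  { replace ((mult_real_fct 2 exp - fct_cte 1)%F 0) with 1.
    apply derivable_pt_lim_ln; lra.
    unfold minus_fct, mult_real_fct, fct_cte. rewrite exp_0. ring. }
  pose proof (derivable_pt_lim_comp _ _ _ _ _ hi hl) as H.
  rewrite exp_0 in H. replace (/ 1 * (2 * 1 - 0)) with 2 in H by field.
  exact H.
Qed.

Lemma ln2_pos : 0 < ln 2.
Proof. rewrite <- ln_1. apply ln_increasing; lra. Qed.

Lemma Un_cv_ext (u v : nat -> R) l : (forall n, u n = v n) -> Un_cv u l -> Un_cv v l.
Proof. intros h H eps he. destruct (H eps he) as [N HN]. exists N. intros n hn. rewrite <- h. auto. Qed.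

Definition tseq (m : nat) : R := ln 2 / INR (m + 1).

Lemma tseq_pos m : 0 < tseq m.
Proof. unfold tseq. apply Rdiv_lt_0_compat. apply ln2_pos. apply lt_0_INR; lia. Qed.

Lemma wcv : Un_cv (fun m => gfun (tseq m) / tseq m) 2.
Proof.
  intros eps he. destruct (gder eps he) as [d Hd].
  pose proof ln2_pos.
  destruct (archimed_cor1 (d / ln 2)) as [N [HN1 HN2]].
  { apply Rdiv_lt_0_compat; [apply cond_pos|auto]. }
  exists N. intros m hm. unfold Rdist.
  pose proof (tseq_pos m).
  assert (Rabs (tseq m) < d).
  { rewrite Rabs_right by lra. unfold tseq.
    assert (INR N <= INR (m+1)) by (apply le_INR; lia).
    assert (0 < INR N) by (apply lt_0_INR; lia).
    apply (Rmult_lt_reg_r (/ ln 2)). apply Rinv_0_lt_compat; auto.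
    replace (ln 2 / INR (m + 1) * / ln 2) with (/ INR (m+1)) by (field; split; lra).
    apply Rle_lt_trans with (/ INR N). apply Rinv_le_contravar; lra.
    unfold Rdiv in HN1. exact HN1. }
  specialize (Hd (tseq m) ltac:(lra) H1).
  replace (0 + tseq m) with (tseq m) in Hd by ring.
  unfold gfun in Hd at 2. rewrite exp_0 in Hd. replace (2 * 1 - 1) with 1 in Hd by ring.
  rewrite ln_1 in Hd. replace (gfun (tseq m) - 0) with (gfun (tseq m)) in Hd by ring. exact Hd.
Qed.

Definition Ffun := mult_real_fct 2 (comp exp (mult_real_fct (- ln 2) id)).

Lemma Fcont : continuity_pt Ffun 2.
Proof. apply derivable_continuous_pt. apply derivable_pt_scal. apply derivable_pt_comp.
  apply derivable_pt_scal, derivable_pt_id. apply derivable_pt_exp. Qed.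

Lemma part4 : Un_cv (fun m => v_star (m + 2)) (1 / 2).
Proof.
  pose proof (continuity_seq _ _ _ Fcont wcv) as H.
  assert (e : Ffun 2 = 1 / 2).
  { unfold Ffun, mult_real_fct, comp, id. replace (- ln 2 * 2) with (- (ln 2 + ln 2)) by ring.
    rewrite exp_Ropp, exp_plus, exp_ln by lra. field. }
  rewrite e in H. refine (Un_cv_ext _ _ _ _ H).
  intros m. pose proof ln2_pos. pose proof (tseq_pos m).
  assert (hk : 0 < INR (m+1)) by (apply lt_0_INR; lia).
  assert (hb : beta_n (m+2) = exp (tseq m)).
  { unfold beta_n, Rpower, tseq. f_equal.
    replace (INR (m+2) - 1) with (INR (m+1)) by (rewrite !plus_INR; simpl; ring). field. lra. }
  unfold v_star. rewrite hb. unfold Ffun, mult_real_fct, comp, id, gfun, Rpower. f_equal. f_equal.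
  replace (1 - INR (m+2)) with (- INR (m+1)) by (rewrite !plus_INR; simpl; ring).
  unfold tseq. field. split; lra.
Qed.

Theorem mainTheorem9 :
  (forall (n : nat) (p : R), (2 <= n)%nat -> 0 < p < 1 / 2 ->
     (forall x, 0 <= x <= 1 -> win_prob n p x = p_n n p x) /\
     (p >= (beta_n n - 1) / (2 * beta_n n - 1) ->
        0 <= x_star n p <= 1 /\
        (forall x, 0 <= x <= 1 -> p_n n p x <= p_n n p (x_star n p)) /\
        p_n n p (x_star n p) = v_star n)) /\
  (forall n : nat, (2 <= n)%nat -> v_star (S n) < v_star n) /\
  Un_cv (fun m => v_star (m + 2)) (1 / 2).
Proof.
  split; [|split].
  - intros n p hn hp. split.
    + intros x _. apply part1.
    + intros h. apply part2; auto.
  - exact part3.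
  - exact part4.
Qed.
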